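(* For every $\delta>0$ there exists $\varepsilon'>0$ such that the following holds for every $\varepsilon\in(0,\varepsilon')$ and every sufficiently large $n$. Let $s'$ be a positive integer, let $H_1,H_2$ be vertex-disjoint multigraphs, each on $n$ vertices, in each of which every pair of vertices is joined by exactly $s'$ parallel edges, let $H=(V(H_1)\cup V(H_2),E(H_1)\cup E(H_2))$, and let $b\leq (1-\delta)\frac{s'n}{\log(n)}$. Then the strategy $\mathcal{S}^+$ is a winning strategy for Maker in the game $\mathrm{MinDeg}^+\!\left(H,\frac{\varepsilon s'n}{b},b,\varepsilon\right)$.
   Context: $\log$ is the natural logarithm. For a multigraph $G$, real $d>0$, integer $b\geq 1$ and $\alpha\in(0,1)$, the game $\mathrm{MinDeg}^+(G,d,b,\alpha)$ is a $(1:b)$ Maker-Breaker game on the edges of $G$ in which Breaker moves first: in each round Breaker claims $b$ unclaimed edges and Maker claims one edge. Whenever Maker claims an edge she immediately gives it a direction; Maker is allowed to claim the same edge twice in two different rounds, so as to give it both directions. Let $d_M^+(v)$ denote Maker's outdegree at $v$, $d_B(v)$ the number of Breaker's edges at $v$, and $d_G(v)$ the degree of $v$ in $G$. Maker wins if for every vertex $v\in V(G)$ she reaches $d_M^+(v)=d$ before $d_B(v)\geq(1-\alpha)d_G(v)$ first happens. A vertex $v$ is called active as long as $d_M^+(v)<d$, and its danger is $\mathrm{dang}(v)=d_B(v)-2b\cdot d_M^+(v)$. Strategy $\mathcal{S}^+$: in every round Maker picks an active vertex $v$ of largest danger, claims an arbitrary edge at $v$ that is not claimed by Breaker and is not already an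 outgoing Maker edge at $v$, and directs it to be outgoing at $v$. *)

(* Defs.v *)
From mathcomp Require Import all_boot.
From Stdlib Require Import Reals ZArith.

Set Implicit Arguments.
Unset Strict Implicit.
Unset Printing Implicit Defensive.

(* A finite multigraph: vertex type V, edge type E (each element of E  *)
(* is one edge, so parallel edges are distinct elements), and the two  *)
(* endpoints of each edge.                                             *)
Section Game.
Variables (V E : finType) (ends : E -> V * V).

Definition incident (e : E) (v : V) : bool :=
  ((ends e).1 == v) || ((ends e).2 == v).

Definition degG (v : V) : nat := #|[set e | incident e v]|.

(* A game position: Breaker's edges B, and Maker's directed claims M,
   where (e, v) \in M means Maker claimed e directed outgoing at v. *)

Definition degB (B : {set E}) (v : V) : nat := #|[set e in B | incident e v]|.

Definition outdeg (M : {set E * V}) (v : V) : nat :=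
  #|[set p in M | p.2 == v]|.

Definition unclaimed (B : {set E}) (M : {set E * V}) (e : E) : bool :=
  (e \notin B) && [forall u : V, (e, u) \notin M].

Definition breaker_move (b : nat) (B : {set E}) (M : {set E * V})
  (S : {set E}) : Prop :=
  S \subset [set e | unclaimed B M e] /\
  #|S| = minn b #|[set e | unclaimed B M e]|.

Definition active (d : R) (M : {set E * V}) (v : V) : Prop :=
  (INR (outdeg M v) < d)%R.

Definition danger (b : nat) (B : {set E}) (M : {set E * V}) (v : V) : Z :=
  (Z.of_nat (degB B v) - 2 * Z.of_nat b * Z.of_nat (outdeg M v))%Z.

Definition max_danger_active (b : nat) (d : R) (B : {set E})
  (M : {set E * V}) (v : V) : Prop :=
  active d M v /\
  forall u : V, active d M u -> (danger b B M u <= danger b B M v)%Z.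

Definition maker_available (B : {set E}) (M : {set E * V}) (e : E) (v : V)
  : Prop :=
  incident e v /\ e \notin B /\ (e, v) \notin M.

Definition splus_move (b : nat) (d : R) (B : {set E}) (M : {set E * V})
  (e : E) (v : V) : Prop :=
  max_danger_active b d B M v /\ maker_available B M e v.

(* Positions reachable when Maker follows S^+ (with arbitrary tie
   breaking and arbitrary choice of edge) against an arbitrary Breaker.
   reachB: Breaker to move; reachM: Maker to move. Breaker moves first. *)
Inductive reachB (b : nat) (d : R) : {set E} -> {set E * V} -> Prop :=
| reachB_start : reachB b d set0 set0
| reachB_step : forall B M e v,
    reachM b d B M -> splus_move b d B M e v ->
    reachB b d B ((e, v) |: M)
with reachM (b : nat) (d : R) : {set E} -> {set E * V} -> Prop :=
| reachM_step : forall B M S,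
    reachB b d B M -> breaker_move b B M S -> reachM b d (B :|: S) M.

Definition maker_lost (d alpha : R) (B : {set E}) (M : {set E * V}) : Prop :=
  exists v : V,
    ((1 - alpha) * INR (degG v) <= INR (degB B v))%R /\ active d M v.

(* S^+ is a winning strategy for Maker in MinDeg^+(G, d, b, alpha):
   against every Breaker play and for every choice allowed by S^+,
   (i) Maker never loses, and (ii) whenever it is Maker's turn and some
   vertex is still active, the strategy prescribes a legal move (for
   every admissible choice of the active vertex of largest danger).
   Since each Maker move adds a new element to the finite set M, (i) and
   (ii) imply that every vertex eventually reaches outdegree d before
   Breaker reaches (1 - alpha) d_G at it. *)
Definition splus_wins (b : nat) (d alpha : R) : Prop :=
  (forall B M, (reachB b d B M \/ reachM b d B M) -> ~ maker_lost d alpha B M)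
  /\
  (forall B M, reachM b d B M ->
     forall v, max_danger_active b d B M v ->
       exists e, maker_available B M e v).

End Game.

(* The multigraph H = H_1 \cup H_2: two vertex-disjoint copies (tagged  *)
(* by a bool) of the complete multigraph on n vertices in which each   *)
(* pair of distinct vertices is joined by exactly s parallel edges.    *)
(* An edge is (copy, (u, w), label) with u < w and label < s.          *)
Definition HV (n : nat) : finType := (bool * 'I_n)%type.

Definition HEdge (n s : nat) : Type :=
  {x : bool * ('I_n * 'I_n) * 'I_s | (x.1.2.1 < x.1.2.2)%nat}.

Definition HE (n s : nat) : finType := HEdge n s.

Definition Hends (n s : nat) (e : HE n s) : HV n * HV n :=
  let x := val e in ((x.1.1, x.1.2.1), (x.1.1, x.1.2.2)).

(* Main.v *)
Require Import Defs.
From mathcomp Require Import all_boot.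
From Stdlib Require Import Reals ZArith.
From mathcomp Require Import zify.
From Stdlib Require Import Lra Lia.
Set Implicit Arguments.
Unset Strict Implicit.
Unset Printing Implicit Defensive.

Section RealFacts.
Local Open Scope R_scope.

Lemma lnle x y : 0 < x -> x <= y -> ln x <= ln y.
Proof.
intros hx [h|h]; [left; apply ln_increasing; auto | subst; lra].
Qed.

Lemma lnstep x : 0 < x -> 1 <= (x + 1) * (ln (x + 1) - ln x).
Proof.
intros hx.
set (y := (-(/ (x + 1)))).
assert (hy : 1 + y <= exp y) by apply exp_ineq1_le.
assert (e1 : 1 + y = x * / (x + 1)) by (unfold y; field; lra).
assert (pos : 0 < x * / (x + 1)).
{ apply Rmult_lt_0_compat; [lra| apply Rinv_0_lt_compat; lra]. }
assert (h2 : ln (x * / (x + 1)) <= y).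
{ rewrite -(ln_exp y). apply lnle; lra. }
have pinv : 0 < / (x + 1) by apply Rinv_0_lt_compat; lra.
rewrite (ln_mult x (/ (x + 1)) hx pinv) in h2.
rewrite (ln_Rinv (x + 1) ltac:(lra)) in h2.
unfold y in h2.
assert (h3 : (x + 1) * (ln x + - ln (x + 1)) <= (x+1) * (-(/ (x + 1)))).
{ apply Rmult_le_compat_l; lra. }
replace ((x+1) * (-(/ (x + 1)))) with (-1) in h3 by (field; lra).
lra.
Qed.

Lemma step_real (k X D Y Z : R) : 0 < k -> X <= k * D -> X + D <= Y ->
  k * Y <= (k + 1) * Z -> X <= Z.
Proof.
intros hk h1 h2 h3.
assert (h4 : k * (X + D) <= k * Y) by (apply Rmult_le_compat_l; lra).
assert (h5 : (k + 1) * X <= (k + 1) * Z) by nra.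
apply Rmult_le_reg_l with (k + 1); lra.
Qed.


Lemma lnle' x y : 0 < x -> x <= y -> ln x <= ln y.
Proof. intros hx [h|h]; [left; apply ln_increasing; auto | subst; lra]. Qed.

Lemma numeric (de eps nR sR bR KR qR L : R) :
  0 < de -> 0 < eps -> eps < de / 8 -> 2 <= nR -> 1 <= qR -> 8 / de <= qR ->
  L = ln (8 * qR) + 1 -> 4 * L / de < ln nR -> 1 <= KR -> KR * qR <= nR ->
  nR < (KR + 1) * qR -> 2 * qR <= nR -> 1 <= bR -> 1 <= sR ->
  bR <= (1 - de) * (sR * nR) / ln nR ->
  2 * bR * (ln (2 * nR) - ln KR) + bR * (ln KR - ln 1) + sR * (KR - 1) + bR
    + 3 * eps * sR * nR <= (1 - eps) * sR * (nR - 1).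
Proof.
intros hde he heps hn hq hq8 hL hlnn hK hKq hKq2 hqn hb hs hbd.
assert (lnpos : 0 < ln nR) by (rewrite -ln_1; apply ln_increasing; lra).
assert (hsn : 0 < sR * nR) by nra.
assert (hbln : bR * ln nR <= (1 - de) * (sR * nR)).
{ apply Rmult_le_compat_r with (r := ln nR) in hbd; [|lra].
  replace ((1 - de) * (sR * nR) / ln nR * ln nR) with ((1 - de) * (sR * nR)) in hbd
    by (field; lra). lra. }
assert (hde1 : de < 1).
{ assert (0 < bR * ln nR) by nra. nra. }
assert (hL0 : 0 <= L).
{ rewrite hL. assert (0 <= ln (8 * qR)); [|lra].
  rewrite -ln_1; apply lnle'; lra. }
assert (hLln : L < de * ln nR / 4).
{ assert (h := hlnn). apply Rmult_lt_compat_r with (r := de / 4) in h; [|lra].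
  replace (4 * L / de * (de / 4)) with L in h by (field; lra). lra. }
assert (hbL : bR * L <= de * (sR * nR) / 4).
{ assert (bR * L <= bR * (de * ln nR / 4)) by (apply Rmult_le_compat_l; lra).
  assert (bR * (de * ln nR / 4) = de / 4 * (bR * ln nR)) by field.
  assert (de / 4 * (bR * ln nR) <= de / 4 * (sR * nR)).
  { apply Rmult_le_compat_l; nra. }
  lra. }
assert (hKd : KR <= de * nR / 8).
{ assert (KR * (8 / de) <= KR * qR) by (apply Rmult_le_compat_l; lra).
  assert (KR * (8 / de) * (de / 8) <= nR * (de / 8)) by (apply Rmult_le_compat_r; lra).
  replace (KR * (8 / de) * (de / 8)) with KR in H0 by (field; lra). lra. }
assert (hsK : sR * KR <= de * (sR * nR) / 8).
{ assert (sR * KR <= sR * (de * nR / 8)) by (apply Rmult_le_compat_l; lra). lra. }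
assert (hnK : nR <= 2 * qR * KR) by nra.
assert (lnK : ln nR <= ln 2 + ln qR + ln KR).
{ rewrite -(ln_mult 2 qR ltac:(lra) ltac:(lra)) -(ln_mult (2 * qR) KR ltac:(lra) ltac:(lra)). apply lnle'; lra. }
assert (ln2n : ln (2 * nR) = ln 2 + ln nR) by (apply ln_mult; lra).
assert (ln8 : ln (8 * qR) = 3 * ln 2 + ln qR).
{ rewrite (ln_mult 8 qR ltac:(lra) ltac:(lra)).
  have -> : 8 = 2 * (2 * 2) by lra.
  rewrite (ln_mult 2 (2 * 2) ltac:(lra) ltac:(lra)) (ln_mult 2 2 ltac:(lra) ltac:(lra)). lra. }
rewrite ln_1.
assert (hcore : 2 * (ln (2 * nR) - ln KR) + (ln KR - 0) + 1 <= ln nR + L) by lra.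
assert (bR * (2 * (ln (2 * nR) - ln KR) + (ln KR - 0) + 1) <= bR * (ln nR + L))
  by (apply Rmult_le_compat_l; lra).
assert (eps * sR * nR <= de / 8 * (sR * nR)) by nra.
assert (0 <= eps * sR) by nra.
nra.
Qed.

End RealFacts.


Section Comb.
Variables (V E : finType) (ends : E -> V * V).

Lemma card_bigcup_le (J : {set V}) (F : V -> {set E}) :
  #|\bigcup_(u in J) F u| <= \sum_(u in J) #|F u|.
Proof.
elim/big_rec2: _ => [|i y1 y2 _ IH]; first by rewrite cards0.
apply: leq_trans (leq_card_setU _ _) _; by rewrite leq_add2l.
Qed.

Definition tset (B : {set E}) (J : {set V}) : {set E} :=
  \bigcup_(u in J) [set e in B | incident ends e u].
Definition sdeg (B : {set E}) (J : {set V}) : nat := \sum_(u in J) degB ends B u.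
Definition sout (M : {set E * V}) (J : {set V}) : nat := \sum_(u in J) outdeg M u.

Lemma tset_le_sdeg B J : #|tset B J| <= sdeg B J.
Proof. exact: card_bigcup_le. Qed.

Lemma tset1 B w : #|tset B [set w]| = degB ends B w.
Proof. by rewrite /tset big_set1. Qed.

Lemma degB_eq B u : degB ends B u = \sum_(e in B) incident ends e u.
Proof.
rewrite /degB -sum1_card big_mkcond /= [RHS]big_mkcond /=.
apply: eq_bigr => e _; rewrite !inE; by case: (e \in B); case: (incident ends e u).
Qed.

Lemma sum_incident_le2 e (J : {set V}) : \sum_(u in J) incident ends e u <= 2.
Proof.
apply: (@leq_trans (\sum_u ((ends e).1 == u) + \sum_u ((ends e).2 == u))).
  rewrite -big_split /= [X in _ <= X](bigID (mem J)) /=; apply: leq_trans (leq_addr _ _).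
  apply: leq_sum => u _; rewrite /incident; by case: ((ends e).1 == u); case: ((ends e).2 == u).
have h a : \sum_u (a == u : nat) = 1.
  by rewrite (bigD1 a) //= eqxx big1 // => u /negbTE; rewrite eq_sym => ->.
by rewrite !h.
Qed.

Lemma card_inc_sum (S : {set E}) u : #|[set e in S | incident ends e u]| = \sum_(e in S) incident ends e u.
Proof.
rewrite -sum1_card big_mkcond /= [RHS]big_mkcond /=.
apply: eq_bigr => e _; rewrite !inE; by case: (e \in S); case: (incident ends e u).
Qed.

Lemma sdeg_breaker B S J : sdeg (B :|: S) J <= sdeg B J + 2 * #|S|.
Proof.
rewrite /sdeg.
apply: (@leq_trans (\sum_(u in J) (degB ends B u + #|[set e in S | incident ends e u]|))).
  apply: leq_sum => u _; rewrite /degB.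
  apply: leq_trans (leq_card_setU _ _); apply: subset_leq_card.
  apply/subsetP => e; rewrite !inE => /andP[/orP[]-> ->] //; by rewrite orbT.
rewrite big_split /= leq_add2l.
under eq_bigr do rewrite card_inc_sum.
rewrite exchange_big /= -sum1_card big_distrr /= leq_sum // => e _.
by rewrite muln1 sum_incident_le2.
Qed.

Lemma tset_breaker B S J : #|tset (B :|: S) J| <= #|tset B J| + #|S|.
Proof.
apply: leq_trans (leq_card_setU _ _); apply: subset_leq_card.
apply/subsetP => e /bigcupP[u uJ]; rewrite !inE => /andP[/orP[eB|eS] he].
  by apply/orP; left; apply/bigcupP; exists u => //; rewrite inE eB he.
by rewrite eS orbT.
Qed.

Lemma outdeg_add (M : {set E * V}) e v u : (e, v) \notin M ->
  outdeg ((e, v) |: M) u = outdeg M u + (u == v).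
Proof.
move=> nM; rewrite /outdeg.
case: (eqVneq u v) => [->|nuv].
  have -> : [set p in (e, v) |: M | p.2 == v] = (e, v) |: [set p in M | p.2 == v].
    by apply/setP => p; rewrite !inE; case: (eqVneq p (e, v)) => [->|]; rewrite ?eqxx.
  by rewrite cardsU1 inE (negbTE nM) addn1.
have -> : [set p in (e, v) |: M | p.2 == u] = [set p in M | p.2 == u].
  apply/setP => p; rewrite !inE; case: (eqVneq p (e, v)) => [->|] //=.
  by rewrite eq_sym (negbTE nuv) andbF.
by rewrite addn0.
Qed.

Lemma sout_add (M : {set E * V}) e v J : (e, v) \notin M ->
  sout ((e, v) |: M) J = sout M J + (v \in J).
Proof.
move=> nM; rewrite /sout.
under eq_bigr do rewrite outdeg_add //.
rewrite big_split /=; congr (_ + _).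
case: (boolP (v \in J)) => vJ.
  by rewrite (bigD1 v) //= eqxx big1 // => u /andP[_ /negbTE ->].
by rewrite big1 // => u uJ; case: eqP => // uv; rewrite -uv uJ in vJ.
Qed.

Variable s : nat.
Hypothesis mult : forall u v : V, u != v ->
  #|[set e | incident ends e u && incident ends e v]| <= s.

Lemma tset_add B (J : {set V}) v : v \notin J ->
  #|tset B J| + degB ends B v <= #|tset B (v |: J)| + s * #|J|.
Proof.
move=> vJ.
have -> : tset B (v |: J) = [set e in B | incident ends e v] :|: tset B J.
  by rewrite /tset big_setU1.
rewrite addnC /degB -cardsUI leq_add2l.
apply: (leq_trans (n := #|\bigcup_(u in J) [set e | incident ends e u && incident ends e v]|)).
  apply: subset_leq_card; apply/subsetP => e; rewrite inE => /andP[].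
  rewrite inE => /andP[_ hv] /bigcupP[u uJ]; rewrite inE => /andP[_ hu].
  by apply/bigcupP; exists u => //; rewrite inE hu hv.
apply: leq_trans (card_bigcup_le _ _) _.
rewrite mulnC -sum_nat_const leq_sum // => u uJ; apply: mult.
by apply: contraNneq vJ => <-.
Qed.

Lemma avail_count B (M : {set E * V}) v :
  degG ends v <= degB ends B v + outdeg M v +
    #|[set e | incident ends e v && (e \notin B) && ((e, v) \notin M)]|.
Proof.
rewrite /degG /degB.
have h1 : #|[set e | (e, v) \in M]| <= outdeg M v.
  rewrite /outdeg -(card_imset _ (f := fun e => (e, v))); last by move=> x y [].
  apply: subset_leq_card; apply/subsetP => p /imsetP[e]; rewrite inE => he ->.
  by rewrite inE he eqxx.
apply: (leq_trans (n := #|[set e in B | incident ends e v] :|: [set e | (e, v) \in M] :|: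
   [set e | incident ends e v && (e \notin B) && ((e, v) \notin M)]|)).
  apply: subset_leq_card; apply/subsetP => e; rewrite !inE => he.
  rewrite he andbT /=; case: (e \in B) => //=; case: ((e, v) \in M) => //.
apply: leq_trans (leq_card_setU _ _) _; rewrite leq_add2r.
apply: leq_trans (leq_card_setU _ _) _; by rewrite leq_add2l.
Qed.

End Comb.


Section InvS.
Variables (V E : finType) (ends : E -> V * V) (s : nat).
Hypothesis mult : forall u v : V, u != v ->
  #|[set e | incident ends e u && incident ends e v]| <= s.
Variables (b : nat) (d : R) (m K : nat).
Hypotheses (K1 : (0 < K)%nat) (Km : (K <= m)%nat) (Vm : (#|V| <= m)%nat).

Local Open Scope R_scope.


Definition Cf (k : nat) : R := 2 * INR b * INR k * (ln (INR m) - ln (INR k)).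
Definition Af (k : nat) : R := INR k * (2 * INR b * (ln (INR m) - ln (INR K))
   + INR b * (ln (INR K) - ln (INR k)) + INR s * (INR K - INR k)).
Definition Sv (B : {set E}) (M : {set E * V}) (J : {set V}) := INR (sdeg ends B J) - 2 * INR b * INR (sout M J).
Definition Tv (B : {set E}) (M : {set E * V}) (J : {set V}) := INR #|tset ends B J| - 2 * INR b * INR (sout M J).

Definition Inv (B : {set E}) (M : {set E * V}) (beta : R) := forall J : {set V}, (0 < #|J|)%nat ->
  (forall u, u \in J -> active d M u) ->
  Sv B M J <= Cf #|J| + 2 * beta /\ ((#|J| <= K)%nat -> Tv B M J <= Af #|J| + beta).

Lemma RC k : (0 < k)%nat -> INR k * (Cf k.+1 + 2 * INR b) <= INR k.+1 * Cf k.
Proof.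
move=> k0; rewrite /Cf S_INR.
have hk : 0 < INR k by apply: lt_0_INR; apply/ltP.
have := @lnstep _ hk; set L := ln (INR k + 1) - ln (INR k) => hL.
have hb := pos_INR b.
have -> : INR k * (2 * INR b * (INR k + 1) * (ln (INR m) - ln (INR k + 1)) + 2 * INR b)
  = (INR k + 1) * (2 * INR b * INR k * (ln (INR m) - ln (INR k))) - 2 * INR b * INR k * ((INR k + 1) * L - 1).
  rewrite /L; ring.
have : 0 <= 2 * INR b * INR k * ((INR k + 1) * L - 1).
  apply: Rmult_le_pos; [apply: Rmult_le_pos|]; lra.
lra.
Qed.

Lemma RA k : (0 < k)%nat -> INR k * (Af k.+1 + INR b + INR s * INR k) <= INR k.+1 * Af k.
Proof.
move=> k0; rewrite /Af S_INR.
have hk : 0 < INR k by apply: lt_0_INR; apply/ltP.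
have := @lnstep _ hk; set L := ln (INR k + 1) - ln (INR k) => hL.
have hb := pos_INR b. have hs := pos_INR s.
set P := 2 * INR b * (ln (INR m) - ln (INR K)).
have -> : INR k * ((INR k + 1) * (P + INR b * (ln (INR K) - ln (INR k + 1)) + INR s * (INR K - (INR k + 1))) + INR b + INR s * INR k)
  = (INR k + 1) * (INR k * (P + INR b * (ln (INR K) - ln (INR k)) + INR s * (INR K - INR k)))
    - INR b * INR k * ((INR k + 1) * L - 1) - INR s * INR k.
  rewrite /L; ring.
have : 0 <= INR b * INR k * ((INR k + 1) * L - 1).
  apply: Rmult_le_pos; [apply: Rmult_le_pos|]; lra.
have : 0 <= INR s * INR k by apply: Rmult_le_pos; lra.
lra.
Qed.


Lemma active_mono (M : {set E * V}) e v u : (e, v) \notin M ->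
  active d ((e, v) |: M) u -> active d M u.
Proof.
move=> nM; rewrite /active outdeg_add // plus_INR => h.
have := pos_INR (u == v); lra.
Qed.

Lemma dominance B (M : {set E * V}) (J : {set V}) v :
  (forall u, u \in J -> (danger ends b B M u <= danger ends b B M v)%Z) ->
  (sdeg ends B J + #|J| * (2 * b * outdeg M v) <= #|J| * degB ends B v + 2 * b * sout M J)%nat.
Proof.
move=> H.
rewrite /sdeg /sout -!sum_nat_const big_distrr /= -!big_split /=.
apply: leq_sum => u uJ; have := H u uJ; rewrite /danger => h; nia.
Qed.

Lemma maker_step B M e v : Inv B M (INR b) -> splus_move ends b d B M e v ->
  Inv B ((e, v) |: M) 0.
Proof.
move=> I [[vact vmax] [vinc [veB vM]]] J J0 Jact.
have Jact0 : forall u, u \in J -> active d M u.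
  by move=> u uJ; apply: (active_mono vM); apply: Jact.
have [IS IT] := I J J0 Jact0.
have hb := pos_INR b.
rewrite /Sv /Tv (sout_add _ vM).
case: (boolP (v \in J)) => vJ.
  rewrite plus_INR /=.
  split; [|move=> /IT]; rewrite /Sv /Tv in IS IT *; lra.
rewrite addn0.
set k := #|J|.
have cJ' : #|v |: J| = k.+1 by rewrite cardsU1 vJ.
have J'act : forall u, u \in v |: J -> active d M u.
  by move=> u; rewrite in_setU1 => /orP[/eqP->|]; [exact: vact| exact: Jact0].
have [IS' IT'] := I (v |: J) (ltac:(by rewrite cJ')) J'act.
rewrite cJ' /Sv /Tv in IS' IT'.
have sd' : sdeg ends B (v |: J) = (degB ends B v + sdeg ends B J)%nat by rewrite /sdeg big_setU1.
have so' : sout M (v |: J) = (outdeg M v + sout M J)%nat by rewrite /sout big_setU1.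
rewrite sd' so' !plus_INR in IS' IT'.
have dom := dominance (fun u uJ => vmax u (Jact0 u uJ)).
have domR : INR (sdeg ends B J) - 2 * INR b * INR (sout M J) <=
   INR k * (INR (degB ends B v) - 2 * INR b * INR (outdeg M v)).
  move/leP: dom => /le_INR; rewrite !plus_INR !mult_INR => h.
  have e2 : INR 2 = 2 by simpl; ring.
  rewrite e2 in h; rewrite /k; nra.
have k0 : (0 < k)%nat by [].
have hk : 0 < INR k by apply: lt_0_INR; apply/ltP.
have hS : INR (sdeg ends B J) - 2 * INR b * INR (sout M J) <= Cf k.
  apply: (@step_real (INR k) _ (INR (degB ends B v) - 2 * INR b * INR (outdeg M v))
     (Cf k.+1 + 2 * INR b)) => //.
    lra.
  rewrite -S_INR; exact: RC.
split; first lra.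
move=> kK.
have hT0 : (#|tset ends B J| <= sdeg ends B J)%nat := tset_le_sdeg _ _ _.
move/leP: hT0 => /le_INR hT0.
case: (ltnP k K) => [kltK|Kk].
  have := IT' kltK => hT'.
  have ta := tset_add mult B vJ.
  move/leP: ta => /le_INR; rewrite !plus_INR mult_INR -/k => ta.
  apply: (@step_real (INR k) _ (INR (degB ends B v) - 2 * INR b * INR (outdeg M v))
     (Af k.+1 + INR b + INR s * INR k)) => //.
      lra.
    lra.
  rewrite Rplus_0_r -S_INR; exact: RA.
have kK' : k = K by apply/eqP; rewrite eqn_leq kK Kk.
have eAC : Af k = Cf k by rewrite /Af /Cf kK'; ring.
rewrite eAC; lra.
Qed.


Lemma breaker_step B M S : Inv B M 0 -> breaker_move b B M S -> Inv (B :|: S) M (INR b).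
Proof.
move=> I [_ cS] J J0 Jact.
have [IS IT] := I J J0 Jact.
have Sb : (#|S| <= b)%nat by rewrite cS geq_minl.
move/leP: Sb => /le_INR Sb.
have h1 := sdeg_breaker ends B S J.
have h2 := tset_breaker ends B S J.
move/leP: h1 => /le_INR; rewrite plus_INR mult_INR => h1.
move/leP: h2 => /le_INR; rewrite plus_INR => h2.
have e2 : INR 2 = 2 by simpl; ring.
rewrite e2 in h1.
rewrite /Sv /Tv in IS IT *.
split; first lra.
move=> /IT; lra.
Qed.

Lemma base_inv : Inv set0 set0 0.
Proof.
move=> J J0 _.
have dB0 u : degB ends set0 u = 0%nat.
  by apply/eqP; rewrite cards_eq0; apply/eqP/setP => e; rewrite !inE.
have od0 u : outdeg (set0 : {set E * V}) u = 0%nat.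
  by apply/eqP; rewrite cards_eq0; apply/eqP/setP => e; rewrite !inE.
have sd0 : sdeg ends set0 J = 0%nat by rewrite /sdeg big1.
have so0 : sout (set0 : {set E * V}) J = 0%nat by rewrite /sout big1.
have ts0 : #|tset ends set0 J| = 0%nat.
  by apply/eqP; rewrite -leqn0 -sd0 tset_le_sdeg.
rewrite /Sv /Tv sd0 so0 ts0 /=.
have Jm : (#|J| <= m)%nat by apply: leq_trans (max_card _) Vm.
have hJ : 0 < INR #|J| by apply: lt_0_INR; apply/ltP.
have hb := pos_INR b. have hs := pos_INR s.
have lJm : ln (INR #|J|) <= ln (INR m) by apply: lnle => //; apply: le_INR; apply/leP.
split.
  rewrite /Cf; have : 0 <= 2 * INR b * INR #|J| * (ln (INR m) - ln (INR #|J|)).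
    apply: Rmult_le_pos; [apply: Rmult_le_pos|]; lra.
  lra.
move=> JK.
have hK : INR #|J| <= INR K by apply: le_INR; apply/leP.
have lKm : ln (INR K) <= ln (INR m) by apply: lnle; [lra| apply: le_INR; apply/leP].
have lJK : ln (INR #|J|) <= ln (INR K) by apply: lnle.
rewrite /Af.
have : 0 <= INR #|J| * (2 * INR b * (ln (INR m) - ln (INR K)) + INR b * (ln (INR K) - ln (INR #|J|)) + INR s * (INR K - INR #|J|)).
  apply: Rmult_le_pos; first lra.
  have := Rmult_le_pos (INR b) (ln (INR m) - ln (INR K)) hb ltac:(lra).
  have := Rmult_le_pos (INR b) (ln (INR K) - ln (INR #|J|)) hb ltac:(lra).
  have := Rmult_le_pos (INR s) (INR K - INR #|J|) hs ltac:(lra).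
  lra.
lra.
Qed.

End InvS.

Scheme reachB_mut := Induction for reachB Sort Prop
with reachM_mut := Induction for reachM Sort Prop.

Section Reach.
Variables (V E : finType) (ends : E -> V * V) (s : nat).
Hypothesis mult : forall u v : V, u != v ->
  #|[set e | incident ends e u && incident ends e v]| <= s.
Variables (b : nat) (d : R) (m K : nat).
Hypotheses (K1 : (0 < K)%nat) (Km : (K <= m)%nat) (Vm : (#|V| <= m)%nat).

Lemma reach_inv :
  (forall B M, reachB ends b d B M -> Inv ends s b d m K B M 0) /\
  (forall B M, reachM ends b d B M -> Inv ends s b d m K B M (INR b)).
Proof.
split.
  apply: (reachB_mut (P := fun B M _ => Inv ends s b d m K B M 0)
                     (P0 := fun B M _ => Inv ends s b d m K B M (INR b))).
  - exact: base_inv.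
  - by move=> B M e v _ IH mv; apply: maker_step.
  - by move=> B M S _ IH bm; apply: breaker_step.
apply: (reachM_mut (P := fun B M _ => Inv ends s b d m K B M 0)
                   (P0 := fun B M _ => Inv ends s b d m K B M (INR b))).
- exact: base_inv.
- by move=> B M e v _ IH mv; apply: maker_step.
- by move=> B M S _ IH bm; apply: breaker_step.
Qed.

Lemma reach_bound B M w : (reachB ends b d B M \/ reachM ends b d B M) -> active d M w ->
  (INR (degB ends B w) - 2 * INR b * INR (outdeg M w) <= Af s b m K 1 + INR b)%R.
Proof.
move=> hr wa.
have I : exists beta, (0 <= beta <= INR b)%R /\ Inv ends s b d m K B M beta.
  have hb := pos_INR b.
  case: hr => [/(proj1 reach_inv)|/(proj2 reach_inv)] I; [exists 0%R| exists (INR b)]; split => //; lra.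
case: I => beta [hbeta I].
have [_ IT] := I [set w] (ltac:(by rewrite cards1)) (ltac:(by move=> u; rewrite inE => /eqP->)).
rewrite cards1 in IT; have := IT K1.
rewrite /Tv tset1 /sout big_set1; lra.
Qed.

End Reach.


Section HFacts.
Variables (n s : nat).

Lemma Hends_det (e : HE n s) (u v : HV n) : u != v ->
  incident (@Hends n s) e u -> incident (@Hends n s) e v ->
  Hends e = if (u.2 < v.2)%nat then (u, v) else (v, u).
Proof.
case: e => [[[c [a b']] l] /= h] uv.
rewrite /incident /Hends /=.
case/orP => /eqP hu; case/orP => /eqP hv; subst u v.
- by rewrite eqxx in uv.
- by rewrite /= h.
- by rewrite /= ltnNge (ltnW h).
- by rewrite eqxx in uv.
Qed.

Lemma Hmult (u v : HV n) : u != v ->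
  (#|[set e | incident (@Hends n s) e u && incident (@Hends n s) e v]| <= s)%nat.
Proof.
move=> uv.
rewrite -[X in (_ <= X)%nat]card_ord.
apply: (@leq_card_in _ _ (fun e : HE n s => (val e).2)).
move=> e1 e2; rewrite !inE => /andP[h1u h1v] /andP[h2u h2v] hl.
have := Hends_det uv h1u h1v; rewrite -(Hends_det uv h2u h2v).
move=> hE; apply: val_inj; move: hE hl.
case: e1 {h1u h1v} => [[[c1 [a1 b1]] l1] /= p1].
case: e2 {h2u h2v} => [[[c2 [a2 b2]] l2] /= p2].
rewrite /Hends /= => hE hl; case: hE => *; subst; by [].
Qed.

Lemma HdegG (v : HV n) : (s * n.-1 <= degG (@Hends n s) v)%nat.
Proof.
case: v => c i.
pose h := fun e : HE n s => (if (val e).1.2.1 == i then (val e).1.2.2 else (val e).1.2.1, (val e).2).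
have cD : #|setX [set~ i] [set: 'I_s]| = (s * n.-1)%nat.
  by rewrite cardsX cardsC1 cardsT !card_ord mulnC.
rewrite -cD /degG.
apply: leq_trans (leq_imset_card h _).
apply: subset_leq_card; apply/subsetP => -[j l]; rewrite !inE andbT => ji.
case: (ltngtP i j) => [lt|gt|eq]; last by move/ord_inj: eq => eq; rewrite eq eqxx in ji.
- apply/imsetP; exists (exist _ (c, (i, j), l) lt : HE n s).
    by rewrite inE /incident /Hends /= eqxx.
  by rewrite /h /= eqxx.
- apply/imsetP; exists (exist _ (c, (j, i), l) gt : HE n s).
    by rewrite inE /incident /Hends /= eqxx orbT.
  by rewrite /h /= (negbTE ji).
Qed.

Lemma HcardV : #|HV n| = (2 * n)%nat.
Proof. by rewrite /HV card_prod card_bool card_ord. Qed.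

End HFacts.


Theorem lemma2p6 :
  forall delta : R, (0 < delta)%R ->
  exists eps' : R, (0 < eps')%R /\
  forall eps : R, (0 < eps)%R -> (eps < eps')%R ->
  exists N : nat, forall n : nat, (N <= n)%nat ->
  forall s' : nat, (0 < s')%nat ->
  forall b : nat, (0 < b)%nat ->
  (INR b <= (1 - delta) * (INR s' * INR n) / ln (INR n))%R ->
  splus_wins (@Hends n s') b (eps * INR s' * INR n / INR b)%R eps.
Proof.
move=> de hde.
exists (de / 8)%R; split; first lra.
move=> eps he heps.
have [q hq] := INR_unbounded (8 / de).
have h8 : (0 < 8 / de)%R by apply: Rdiv_lt_0_compat; lra.
have qpos : (0 < q)%nat.
  case: q hq => [|q] //=; lra.
pose L := (ln (8 * INR q) + 1)%R.
have [N0 hN0] := INR_unbounded (exp (4 * L / de)).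
exists (N0 + 2 * q + 2)%nat.
move=> n hn s' hs b hb hbd.
pose K := (n %/ q)%nat.
pose m := (2 * n)%nat.
have qn : (q <= n)%nat by lia.
have K1 : (0 < K)%nat by rewrite /K divn_gt0.
have Km : (K <= m)%nat by apply: leq_trans (leq_div n q) _; rewrite /m; lia.
have Vm : (#|HV n| <= m)%nat by rewrite HcardV.
pose d := (eps * INR s' * INR n / INR b)%R.
have RB := @reach_bound _ _ (@Hends n s') s' (@Hmult n s') b d m K K1 Km Vm.
have e2 : INR 2 = 2%R by simpl; ring.
have hnR : (2 <= INR n)%R.
  rewrite -e2; apply: le_INR; apply/leP; lia.
have hqR : (1 <= INR q)%R by rewrite -INR_1; apply: le_INR; apply/leP.
have hKR : (1 <= INR K)%R by rewrite -INR_1; apply: le_INR; apply/leP.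
have hbR : (1 <= INR b)%R by rewrite -INR_1; apply: le_INR; apply/leP.
have hsR : (1 <= INR s')%R by rewrite -INR_1; apply: le_INR; apply/leP.
have hKq : (INR K * INR q <= INR n)%R.
  rewrite -mult_INR; apply: le_INR; apply/leP; exact: leq_divM.
have hKq2 : (INR n < (INR K + 1) * INR q)%R.
  rewrite -S_INR -mult_INR; apply: lt_INR; apply/ltP; exact: ltn_ceil.
have hqn : (2 * INR q <= INR n)%R.
  rewrite -e2 -mult_INR; apply: le_INR; apply/leP; lia.
have hlnn : (4 * L / de < ln (INR n))%R.
  have hN : (INR N0 <= INR n)%R by apply: le_INR; apply/leP; lia.
  rewrite -[X in (X < _)%R]ln_exp; apply: ln_increasing; first exact: exp_pos.
  lra.
have num := @numeric de eps (INR n) (INR s') (INR b) (INR K) (INR q) L hde he ltac:(lra)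
  hnR hqR ltac:(lra) erefl hlnn hKR hKq hKq2 hqn hbR hsR hbd.
have hBnd : (Af s' b m K 1 + INR b + 3 * eps * INR s' * INR n <= (1 - eps) * INR s' * (INR n - 1))%R.
  rewrite /Af /m mult_INR e2 /=; lra.
have lnpos : (0 < ln (INR n))%R by rewrite -ln_1; apply: ln_increasing; lra.
have hde1 : (de < 1)%R.
  apply: Rnot_le_lt => h.
  have h1 : ((1 - de) * (INR s' * INR n) <= 0)%R.
    have : (0 <= INR s' * INR n)%R by apply: Rmult_le_pos; lra.
    nra.
  have h2 : (0 < / ln (INR n))%R by apply: Rinv_0_lt_compat.
  rewrite /Rdiv in hbd; nra.
have eN : INR n = (INR n.-1 + 1)%R by rewrite -S_INR prednK //; lia.
have hbpos : (0 < INR b)%R by lra.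
have hbd' : (INR b * d = eps * INR s' * INR n)%R by rewrite /d; field; lra.
have hsn : (0 < eps * INR s' * INR n)%R.
  apply: Rmult_lt_0_compat; [apply: Rmult_lt_0_compat|]; lra.
split.
  move=> B M hr [w [hl wa]].
  have hw := RB B M w hr wa.
  have hG := @HdegG n s' w.
  move/leP: hG => /le_INR; rewrite mult_INR => hG.
  rewrite /active in wa.
  have h1 : (INR b * INR (outdeg M w) < INR b * d)%R by apply: Rmult_lt_compat_l.
  have h2 : ((1 - eps) * (INR s' * INR n.-1) <= (1 - eps) * INR (degG (@Hends n s') w))%R.
    apply: Rmult_le_compat_l; lra.
  have h3 : (0 <= eps * INR s')%R by apply: Rmult_le_pos; lra.
  nra.
move=> B M hr v [va vmax].
have hc := avail_count (@Hends n s') B M v.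
set A := [set e | _] in hc.
case: (boolP (0 < #|A|)%nat) => [/card_gt0P [e]|h0].
  rewrite inE => /andP[/andP[h1 h2] h3].
  by exists e; split; [|split].
have A0 : #|A| = 0%nat by lia.
rewrite A0 addn0 in hc.
exfalso.
have hw := RB B M v (or_intror hr) va.
have hG := @HdegG n s' v.
move/leP: hc => /le_INR; rewrite plus_INR => hc.
move/leP: hG => /le_INR; rewrite mult_INR => hG.
rewrite /active in va.
have h1 : ((2 * INR b + 1) * INR (outdeg M v) < (2 * INR b + 1) * d)%R.
  apply: Rmult_lt_compat_l; rewrite /d; lra.
have hd : (d <= eps * INR s' * INR n)%R.
  rewrite /d; apply: (Rmult_le_reg_l (INR b)) => //.
  rewrite hbd'.
  have : (0 <= eps * INR s' * INR n)%R by lra.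
  move: hbR; rewrite /d => hbR; nra.
have h3 : (0 <= eps * INR s' * (INR n.-1))%R.
  apply: Rmult_le_pos; [apply: Rmult_le_pos|]; try lra; exact: pos_INR.
nra.
Qed.
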